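(* Let $k\ge1$, let $\Lambda$ be a row-finite $k$-graph with no sources and $R$ a commutative ring with $1$. The following are equivalent: (1) $\mathrm{KP}_R(\Lambda)$ is commutative; (2) $r(\lambda)=s(\lambda)$ for all $\lambda\in\Lambda$, and for every $n\in\mathbb{N}^k$ the restriction of $r$ to $\Lambda^n$ is injective; (3) $\Lambda$ is isomorphic (as a $k$-graph) to the disjoint union $\bigsqcup_{v\in\Lambda^0}\mathbb{N}^k$ of copies of $\mathbb{N}^k$, where $\mathbb{N}^k$ is viewed as a $k$-graph with one object and degree map the identity; (4) $\mathrm{KP}_R(\Lambda)\cong\bigoplus_{v\in\Lambda^0}R[x_1,x_1^{-1},\ldots,x_k,x_k^{-1}]$ (Laurent polynomials in $k$ commuting indeterminates).
   Context: $\mathbb{N}^k$ is regarded as a category with one object, composition being addition. A $k$-graph is a countable category $\Lambda$ with a functor $d:\Lambda\to\mathbb{N}^k$ with unique factorization: whenever $d(\lambda)=m+n$ there are unique $\mu,\nu$ with $d(\mu)=m$, $d(\nu)=n$, $\lambda=\mu\nu$. Vertices (objects) are identified with degree-$0$ morphisms; $\Lambda^0$ is the vertex set, $\Lambda^n=d^{-1}(n)$, $r,s$ are range and source, $\lambda\mu$ is defined when $s(\lambda)=r(\mu)$; $v\Lambda^n=\{\lambda\in\Lambda^n:r(\lambda)=v\}$. Row-finite: each $v\Lambda^n$ is finite; no sources: each $v\Lambda^n$ is nonempty. With $\Lambda^{\neq0}$ the paths of nonzero degree and formal symbols $\lambda^*$, a Kumjian-Pask $\Lambda$-family in an $R$-algebra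 $A$ is $P:\Lambda^0\to A$, $S:\Lambda^{\neq0}\cup\{\lambda^*\}\to A$ with: (KP1) the $P_v$ are mutually orthogonal idempotents; (KP2) for $r(\mu)=s(\lambda)$: $S_\lambda S_\mu=S_{\lambda\mu}$, $S_{\mu^*}S_{\lambda^*}=S_{(\lambda\mu)^*}$, $P_{r(\lambda)}S_\lambda=S_\lambda=S_\lambda P_{s(\lambda)}$, $P_{s(\lambda)}S_{\lambda^*}=S_{\lambda^*}=S_{\lambda^*}P_{r(\lambda)}$; (KP3) $S_{\lambda^*}S_\mu=\delta_{\lambda,\mu}P_{s(\lambda)}$ when $d(\lambda)=d(\mu)$; (KP4) $P_v=\sum_{\lambda\in v\Lambda^n}S_\lambda S_{\lambda^*}$ for $n\neq0$. $\mathrm{KP}_R(\Lambda)$ is the $R$-algebra generated by a universal Kumjian-Pask $\Lambda$-family $(p,s)$ (every Kumjian-Pask family in an $R$-algebra is the image of $(p,s)$ under a unique $R$-algebra homomorphism). *)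

(* Defs.v *)
From HB Require Import structures.
From mathcomp Require Import all_boot all_algebra.
From mathcomp Require Import finmap.
From mathcomp.multinomials Require Import monalg.

Set Implicit Arguments.
Unset Strict Implicit.
Unset Printing Implicit Defensive.

Import GRing.Theory.
Local Open Scope ring_scope.

Notation Nk k := {ffun 'I_k -> nat}.

(* Composition [kcomp l m] (= l m, "l after m") is only
   meaningful when [ks l = kr m]; the axioms only constrain that case.     *)
Record kgraph (k : nat) := KGraph {
  kv : countType;
  kp : countType;
  kr : kp -> kv;
  ks : kp -> kv;
  kid : kv -> kp;
  kcomp : kp -> kp -> kp;
  kd : kp -> Nk k;
  kr_id : forall v, kr (kid v) = v;
  ks_id : forall v, ks (kid v) = v;
  kr_comp : forall l m, ks l = kr m -> kr (kcomp l m) = kr l;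
  ks_comp : forall l m, ks l = kr m -> ks (kcomp l m) = ks m;
  kcomp_idl : forall l, kcomp (kid (kr l)) l = l;
  kcomp_idr : forall l, kcomp l (kid (ks l)) = l;
  kcompA : forall l m n, ks l = kr m -> ks m = kr n ->
             kcomp (kcomp l m) n = kcomp l (kcomp m n);
  kd_id : forall v, kd (kid v) = 0;
  kd_comp : forall l m, ks l = kr m -> kd (kcomp l m) = kd l + kd m;
  kfact : forall l (m n : Nk k), kd l = m + n ->
     exists! mn : kp * kp,
       [/\ ks mn.1 = kr mn.2, kd mn.1 = m, kd mn.2 = n & l = kcomp mn.1 mn.2]
}.

Definition row_finite k (L : kgraph k) : Prop :=
  forall (v : kv L) (n : Nk k), exists s : seq (kp L),
    forall l, l \in s <-> (kr l = v /\ kd l = n).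

Definition no_sources k (L : kgraph k) : Prop :=
  forall (v : kv L) (n : Nk k), exists l : kp L, kr l = v /\ kd l = n.

Definition kgraph_iso k (L1 L2 : kgraph k) : Prop :=
  exists (fv : kv L1 -> kv L2) (fp : kp L1 -> kp L2),
    [/\ bijective fv /\ bijective fp,
        (forall l, kr (fp l) = fv (kr l)) /\ (forall l, ks (fp l) = fv (ks l)),
        (forall v, fp (kid v) = kid (fv v)),
        (forall l m, ks l = kr m -> fp (kcomp l m) = kcomp (fp l) (fp m))
      & (forall l, kd (fp l) = kd l)].

Section DisjointUnion.
Variables (k : nat) (V : countType).

Definition du_r (x : V * Nk k) : V := x.1.
Definition du_id (v : V) : V * Nk k := (v, 0).
Definition du_comp (x y : V * Nk k) : V * Nk k := (x.1, x.2 + y.2).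
Definition du_d (x : V * Nk k) : Nk k := x.2.

Lemma du_kr_id v : du_r (du_id v) = v. Proof. by []. Qed.
Lemma du_kr_comp l m : du_r l = du_r m -> du_r (du_comp l m) = du_r l.
Proof. by []. Qed.
Lemma du_ks_comp l m : du_r l = du_r m -> du_r (du_comp l m) = du_r m.
Proof. by []. Qed.
Lemma du_idl l : du_comp (du_id (du_r l)) l = l.
Proof. by case: l => v m; rewrite /du_comp /= add0r. Qed.
Lemma du_idr l : du_comp l (du_id (du_r l)) = l.
Proof. by case: l => v m; rewrite /du_comp /= addr0. Qed.
Lemma du_compA l m n : du_r l = du_r m -> du_r m = du_r n ->
  du_comp (du_comp l m) n = du_comp l (du_comp m n).
Proof. by move=> _ _; rewrite /du_comp /= addrA. Qed.
Lemma du_d_id v : du_d (du_id v) = 0. Proof. by []. Qed.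
Lemma du_d_comp l m : du_r l = du_r m -> du_d (du_comp l m) = du_d l + du_d m.
Proof. by []. Qed.
Lemma du_fact l (m n : Nk k) : du_d l = m + n ->
  exists! mn : (V * Nk k) * (V * Nk k),
    [/\ du_r mn.1 = du_r mn.2, du_d mn.1 = m, du_d mn.2 = n
      & l = du_comp mn.1 mn.2].
Proof.
case: l => v d /= Hd; exists ((v, m), (v, n)); split.
  by split => //; rewrite /du_comp /= Hd.
case=> [[a ma] [b mb]] /= [Hab Hm Hn]; rewrite /du_comp /= => [[Hv _]].
by rewrite /du_r /= in Hab; subst.
Qed.

Definition disjoint_union_Nk : kgraph k :=
  @KGraph k V (V * Nk k)%type du_r du_r du_id du_comp du_d
    du_kr_id du_kr_id du_kr_comp du_ks_comp du_idl du_idr du_compA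
    du_d_id du_d_comp du_fact.
End DisjointUnion.

(* Kumjian-Pask algebras are in general non-unital, so we cannot use
   MathComp's (unital) algType; we package the data explicitly.         *)
Record nalg (R : comNzRingType) := NAlg {
  ncar :> zmodType;
  nscale : R -> ncar -> ncar;
  nmul : ncar -> ncar -> ncar;
  nscaleA : forall a b x, nscale a (nscale b x) = nscale (a * b) x;
  nscale1 : forall x, nscale 1 x = x;
  nscaleDr : forall a x y, nscale a (x + y) = nscale a x + nscale a y;
  nscaleDl : forall a b x, nscale (a + b) x = nscale a x + nscale b x;
  nmulA : forall x y z, nmul x (nmul y z) = nmul (nmul x y) z;
  nmulDl : forall x y z, nmul (x + y) z = nmul x z + nmul y z;
  nmulDr : forall x y z, nmul x (y + z) = nmul x y + nmul x z;
  nmulZl : forall a x y, nmul (nscale a x) y = nscale a (nmul x y);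
  nmulZr : forall a x y, nmul x (nscale a y) = nscale a (nmul x y)
}.
Arguments nscale {R} A a x : rename.
Arguments nmul {R} A x y : rename.

Definition nalg_hom (R : comNzRingType) (A B : nalg R) (f : A -> B) : Prop :=
  [/\ forall x y : A, f (x + y) = f x + f y,
      forall (a : R) (x : A), f (nscale A a x) = nscale B a (f x)
    & forall x y : A, f (nmul A x y) = nmul B (f x) (f y)].

Definition nalg_commutative (R : comNzRingType) (A : nalg R) : Prop :=
  forall x y : A, nmul A x y = nmul A y x.

(* The paper's S is defined on the paths of
   nonzero degree and their ghosts; we take S, Sst total on paths and fix
   the standard convention S_v = S_{v*} = P_v on vertices, imposing
   (KP2)-(KP4) exactly as in the paper, i.e. for paths of nonzero degree. *)
Definition KP_family (R : comNzRingType) k (L : kgraph k) (A : nalg R)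
    (P : kv L -> A) (S Sst : kp L -> A) : Prop :=
  [/\
      (forall v, S (kid v) = P v /\ Sst (kid v) = P v),
      (forall v, nmul A (P v) (P v) = P v) /\
      (forall v w, v <> w -> nmul A (P v) (P w) = 0),
      (forall l m, kd l != 0 -> kd m != 0 -> ks l = kr m ->
         nmul A (S l) (S m) = S (kcomp l m) /\
         nmul A (Sst m) (Sst l) = Sst (kcomp l m)) /\
      (forall l, kd l != 0 ->
         [/\ nmul A (P (kr l)) (S l) = S l, nmul A (S l) (P (ks l)) = S l,
             nmul A (P (ks l)) (Sst l) = Sst l
           & nmul A (Sst l) (P (kr l)) = Sst l]),
      (forall l m, kd l != 0 -> kd l = kd m ->
         nmul A (Sst l) (S m) = if l == m then P (ks l) else 0)
    &
      (forall (v : kv L) (n : Nk k), n != 0 ->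
         forall s : seq (kp L), uniq s ->
           (forall l, l \in s <-> (kr l = v /\ kd l = n)) ->
           P v = \sum_(l <- s) nmul A (S l) (Sst l))].

(* (B, p, s, sst) is a universal Kumjian-Pask family, i.e. B = KP_R(L):
   every Kumjian-Pask family in an R-algebra is the image of (p, s) under
   a unique R-algebra homomorphism. *)
Definition KP_universal (R : comNzRingType) k (L : kgraph k) (B : nalg R)
    (p : kv L -> B) (s sst : kp L -> B) : Prop :=
  KP_family p s sst /\
  forall (A : nalg R) (P : kv L -> A) (S Sst : kp L -> A),
    KP_family P S Sst ->
    exists phi : B -> A,
      [/\ nalg_hom phi,
          (forall v, phi (p v) = P v),
          (forall l, phi (s l) = S l),
          (forall l, phi (sst l) = Sst l)
        & forall psi : B -> A,
            [/\ nalg_hom psi,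
                (forall v, psi (p v) = P v),
                (forall l, psi (s l) = S l)
              & (forall l, psi (sst l) = Sst l)] ->
            forall x, psi x = phi x].

(* Laurent polynomials R[x_1^{+-1}, ..., x_k^{+-1}]: finitely supported
   functions Z^k -> R (coefficient of x^a at a : Z^k), with the R-module
   structure of {malg R[Z^k]} and the convolution product
   (c x^a)(d x^b) = (c d) x^(a+b).                                         *)
Notation Zk k := {ffun 'I_k -> int}.
Definition laurent (R : comNzRingType) (k : nat) := {malg R[Zk k]}.

Definition laurent_mul (R : comNzRingType) k (f g : laurent R k) : laurent R k :=
  \sum_(a <- msupp f) \sum_(b <- msupp g) << f@_a * g@_b *g (a + b) >>.

Definition laurent_dsum (R : comNzRingType) k (V : countType) :=
  {malg (laurent R k)[V]}.

Definition dsum_scale (R : comNzRingType) k (V : countType) (c : R)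
    (f : laurent_dsum R k V) : laurent_dsum R k V :=
  [malg v in msupp f => c *: f@_v].

Definition dsum_mul (R : comNzRingType) k (V : countType)
    (f g : laurent_dsum R k V) : laurent_dsum R k V :=
  [malg v in msupp f => laurent_mul f@_v g@_v].

Definition iso_to_laurent_dsum (R : comNzRingType) k (V : countType)
    (B : nalg R) : Prop :=
  exists phi : B -> laurent_dsum R k V,
    [/\ bijective phi,
        forall x y : B, phi (x + y) = phi x + phi y,
        forall (a : R) (x : B), phi (nscale B a x) = dsum_scale a (phi x)
      & forall x y : B, phi (nmul B x y) = dsum_mul (phi x) (phi y)].

(* Main.v *)
Require Import Defs.
From HB Require Import structures.
From mathcomp Require Import all_boot all_algebra.
From mathcomp Require Import finmap.
From mathcomp.multinomials Require Import monalg.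
From mathcomp.classical Require boolp.
From Stdlib Require Import ClassicalEpsilon.
Set Implicit Arguments.
Unset Strict Implicit.
Unset Printing Implicit Defensive.
Import GRing.Theory.
Local Open Scope ring_scope.
From mathcomp Require Import zify.

Section KG.
Variables (k : nat) (L : kgraph k).

Lemma Nk_addI (a b c : Nk k) : a + b = a + c -> b = c.
Proof.
move=> H; apply/ffunP => i; have := congr1 (fun f : Nk k => f i) H.
by rewrite !ffunE => /addnI.
Qed.

Lemma kfact_uniq (a b a' b' : kp L) : ks a = kr b -> ks a' = kr b' ->
  kd a = kd a' -> kcomp a b = kcomp a' b' -> a = a' /\ b = b'.
Proof.
move=> h h' hd e.
have hdb : kd b = kd b'.
  apply: (@Nk_addI (kd a)); rewrite -kd_comp // e kd_comp // hd //.
have [[x y] [_ U]] := kfact (kd_comp h).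
have E1 := U (a, b) (And4 h erefl erefl erefl).
have E2 := U (a', b') (And4 h' (esym hd) (esym hdb) e).
by rewrite E1 in E2; case: E2 => -> ->.
Qed.

Lemma kd0_id (l : kp L) : kd l = 0 -> l = kid (kr l).
Proof.
move=> h.
have e : kcomp (kid (kr l)) l = kcomp l (kid (ks l)) by rewrite kcomp_idl kcomp_idr.
have [] := kfact_uniq (ks_id _) (esym (kr_id _)) _ e.
  by rewrite kd_id h.
by move=> ->.
Qed.

Definition fact (l : kp L) (m : Nk k) : kp L * kp L :=
  epsilon (inhabits (l, l)) (fun ab => [/\ ks ab.1 = kr ab.2, kd ab.1 = m & l = kcomp ab.1 ab.2]).

Lemma fact_spec l m n : kd l = m + n ->
  [/\ ks (fact l m).1 = kr (fact l m).2, kd (fact l m).1 = m, kd (fact l m).2 = n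
    & l = kcomp (fact l m).1 (fact l m).2].
Proof.
move=> h.
have [[x y] [[h1 h2 h3 h4] _]] := @kfact k L l m n h.
have := @epsilon_spec _ (inhabits (l, l)) (fun ab => [/\ ks ab.1 = kr ab.2, kd ab.1 = m & l = kcomp ab.1 ab.2]).
case. by exists (x, y); split.
rewrite -/(fact l m) => e1 e2 e3; split => //.
have E : kd l = kd (fact l m).1 + kd (fact l m).2 by rewrite -kd_comp // -e3.
by apply: (@Nk_addI m); rewrite -h E e2.
Qed.

Lemma fact_comp (a b : kp L) : ks a = kr b -> fact (kcomp a b) (kd a) = (a, b).
Proof.
move=> h; have [h1 h2 _ h4] := fact_spec (kd_comp h).
have [] := kfact_uniq h h1 (esym h2) h4.
by case: (fact _ _) => x y /= -> ->.
Qed.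

Lemma fact_compd (a b : kp L) m : ks a = kr b -> kd a = m -> fact (kcomp a b) m = (a, b).
Proof. by move=> h <-; apply: fact_comp. Qed.

Lemma fact_pre_compr (A R : kp L) m n : ks A = kr R -> kd A = m + n ->
  (fact (kcomp A R) m).1 = (fact A m).1.
Proof.
move=> h hd; have [h1 h2 h3 h4] := fact_spec hd.
have hs : ks (fact A m).2 = kr R by rewrite -h {2}h4 ks_comp.
rewrite {1}h4 kcompA // fact_compd //.
by rewrite kr_comp.
Qed.

Lemma kr_fact1 l m n : kd l = m + n -> kr (fact l m).1 = kr l.
Proof. by move=> hd; have [h1 _ _ h4] := fact_spec hd; rewrite {2}h4 kr_comp. Qed.

Lemma ks_fact2 l m n : kd l = m + n -> ks (fact l m).2 = ks l.
Proof. by move=> hd; have [h1 _ _ h4] := fact_spec hd; rewrite {2}h4 ks_comp. Qed.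

End KG.

Section IPath.
Variables (k : nat) (L : kgraph k).

Record ipath := IPath {
  ip : Nk k -> kp L;
  ip_d : forall n, kd (ip n) = n;
  ip_pre : forall m n, (fact (ip (m + n)) m).1 = ip m }.

Lemma ipath_eq (x y : ipath) : ip x = ip y -> x = y.
Proof.
case: x => f fd fp; case: y => g gd gp /= e; subst g.
by rewrite (boolp.Prop_irrelevance fd gd) (boolp.Prop_irrelevance fp gp).
Qed.

Lemma ip_decomp (x : ipath) m n :
  ks (ip x m) = kr (fact (ip x (m + n)) m).2 /\
  ip x (m + n) = kcomp (ip x m) (fact (ip x (m + n)) m).2.
Proof.
have [h1 _ _ h4] := fact_spec (ip_d x (m + n)).
by rewrite ip_pre in h1 h4.
Qed.

Definition rng (x : ipath) := kr (ip x 0).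

Lemma kr_ip x n : kr (ip x n) = rng x.
Proof.
have [h1 h2] := ip_decomp x 0 n; rewrite add0r in h1 h2.
by rewrite h2 kr_comp.
Qed.

Lemma ip0 x : ip x 0 = kid (rng x).
Proof. by rewrite (kd0_id (ip_d x 0)) kr_ip. Qed.

Definition shf (x : ipath) m n := (fact (ip x (m + n)) m).2.

Lemma shf_d x m n : kd (shf x m n) = n.
Proof. by have [] := fact_spec (ip_d x (m + n)). Qed.

Lemma shf_pre x m a b : (fact (shf x m (a + b)) a).1 = shf x m a.
Proof.
have [hXQ eT] := ip_decomp x m (a + b).
have [h1 h2 h3 h4] := fact_spec (shf_d x m (a + b)).
move: hXQ eT h1 h2 h3 h4; rewrite -/(shf x m (a + b)).
set Q := shf x m (a + b); set X := ip x m.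
set Q1 := (fact Q a).1; set Q2 := (fact Q a).2 => hXQ eT h1 h2 h3 h4.
have hXQ1 : ks X = kr Q1 by rewrite hXQ h4 kr_comp.
have eT' : ip x (m + (a + b)) = kcomp (kcomp X Q1) Q2.
  by rewrite eT h4 kcompA.
have hs2 : ks (kcomp X Q1) = kr Q2 by rewrite ks_comp.
have hd2 : kd (kcomp X Q1) = m + a by rewrite kd_comp // h2 ip_d.
have eA : ip x (m + a) = kcomp X Q1.
  by have := ip_pre x (m + a) b; rewrite -addrA eT' fact_compd.
rewrite /shf eA fact_compd //; by rewrite ip_d.
Qed.

Definition shift (x : ipath) m : ipath := IPath (shf_d x m) (shf_pre x m).

Lemma ip_shift_decomp x m n :
  ks (ip x m) = kr (ip (shift x m) n) /\ ip x (m + n) = kcomp (ip x m) (ip (shift x m) n).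
Proof. exact: ip_decomp. Qed.

Lemma rng_shift x m : rng (shift x m) = ks (ip x m).
Proof. by have [-> _] := ip_shift_decomp x m 0. Qed.

Lemma shift_char x m (z : ipath) :
  (forall n, ks (ip x m) = kr (ip z n) /\ ip x (m + n) = kcomp (ip x m) (ip z n)) ->
  shift x m = z.
Proof.
move=> H; apply: ipath_eq; apply: boolp.funext => n /=.
have [h1 h2] := H n; by rewrite /shf h2 fact_compd // ip_d.
Qed.

Lemma shift_shift x a b : shift (shift x a) b = shift x (a + b).
Proof.
symmetry; apply: shift_char => n.
have [h1 e1] := ip_shift_decomp x a (b + n).
have [h2 e2] := ip_shift_decomp (shift x a) b n.
have [h3 e3] := ip_shift_decomp x a b.
split.
  rewrite e3 ks_comp //.
by rewrite -addrA e1 e2 e3 kcompA.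
Qed.

Definition conc (l : kp L) (x : ipath) n := (fact (kcomp l (ip x n)) n).1.

Lemma ks_kr_ip l x n : ks l = rng x -> ks l = kr (ip x n).
Proof. by rewrite kr_ip. Qed.

Lemma conc_d l x (h : ks l = rng x) n : kd (conc l x n) = n.
Proof.
have hd : kd (kcomp l (ip x n)) = n + kd l by rewrite kd_comp ?ip_d ?(addrC n) //; exact: ks_kr_ip.
by have [] := fact_spec hd.
Qed.

Lemma conc_pre l x (h : ks l = rng x) a b : (fact (conc l x (a + b)) a).1 = conc l x a.
Proof.
set W := kcomp l (ip x (a + b)).
have hW : kd W = a + b + kd l by rewrite kd_comp ?ip_d ?(addrC (a + b)) //; exact: ks_kr_ip.
have [h1 h2 h3 h4] := fact_spec hW.
rewrite /conc -/W.
rewrite -(fact_pre_compr h1 (n := b)) ?h2 // -h4.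
have [hs e] := ip_shift_decomp x a b.
rewrite /W e -kcompA //; last exact: ks_kr_ip.
rewrite (fact_pre_compr (n := kd l)) //.
  by rewrite ks_comp //; exact: ks_kr_ip.
by rewrite kd_comp ?ip_d ?(addrC a) //; exact: ks_kr_ip.
Qed.

Definition concat (l : kp L) (x : ipath) : ipath :=
  match (ks l =P rng x) with
  | ReflectT h => IPath (conc_d h) (conc_pre h)
  | ReflectF _ => x
  end.

Lemma ip_concat l x : ks l = rng x -> ip (concat l x) = conc l x.
Proof. by rewrite /concat; case: (ks l =P rng x). Qed.

Lemma ip_concat_d l x n : ks l = rng x -> ip (concat l x) (kd l + n) = kcomp l (ip x n).
Proof.
move=> h; rewrite ip_concat // /conc.
have [hs e] := ip_shift_decomp x n (kd l).
rewrite (addrC (kd l) n) e -kcompA //; last exact: ks_kr_ip.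
rewrite fact_compd //; last by rewrite kd_comp ?ip_d ?(addrC n) //; exact: ks_kr_ip.
by rewrite ks_comp //; exact: ks_kr_ip.
Qed.

Lemma rng_concat l x : ks l = rng x -> rng (concat l x) = kr l.
Proof.
move=> h; rewrite /rng ip_concat // /conc.
have hd : kd (kcomp l (ip x 0)) = 0 + kd l by rewrite kd_comp ?ip_d ?add0r ?addr0 //; exact: ks_kr_ip.
by rewrite (kr_fact1 hd) kr_comp //; exact: ks_kr_ip.
Qed.

Lemma concat_at l x : ks l = rng x -> ip (concat l x) (kd l) = l.
Proof.
move=> h; have := ip_concat_d 0 h; rewrite addr0 => ->.
by rewrite ip0 -h kcomp_idr.
Qed.

Lemma shift_concat l x : ks l = rng x -> shift (concat l x) (kd l) = x.
Proof.
move=> h; apply: shift_char => n; rewrite concat_at // ip_concat_d //.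
by split => //; exact: ks_kr_ip.
Qed.

Lemma concat_shift y m : concat (ip y m) (shift y m) = y.
Proof.
have h : ks (ip y m) = rng (shift y m) by rewrite rng_shift.
apply: ipath_eq; apply: boolp.funext => n.
rewrite ip_concat // /conc.
have [_ e] := ip_shift_decomp y m n.
by rewrite -e addrC ip_pre.
Qed.

Lemma ip_agree (y y' : ipath) : (forall n, exists p, ip y (n + p) = ip y' (n + p)) -> y = y'.
Proof.
move=> H; apply: ipath_eq; apply: boolp.funext => n.
have [p e] := H n; by rewrite -(ip_pre y n p) -(ip_pre y' n p) e.
Qed.

Lemma concat_concat l m x : ks l = kr m -> ks m = rng x ->
  concat l (concat m x) = concat (kcomp l m) x.
Proof.
move=> hlm hm.
have hl : ks l = rng (concat m x) by rewrite rng_concat.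
have hlm' : ks (kcomp l m) = rng x by rewrite ks_comp.
apply: ip_agree => n; exists (kd l + kd m).
have -> : n + (kd l + kd m) = kd l + (kd m + n) by rewrite addrC -addrA.
rewrite ip_concat_d // ip_concat_d //.
have -> : kd l + (kd m + n) = kd (kcomp l m) + n by rewrite kd_comp // addrA.
rewrite ip_concat_d // kcompA //; exact: ks_kr_ip.
Qed.

End IPath.

Section Exist.
Variables (k : nat) (L : kgraph k) (hns : no_sources L) (w : kv L).

Definition one : Nk k := [ffun _ => 1%N].

Definition nsx (u : kv L) : kp L :=
  epsilon (inhabits (kid u)) (fun l => kr l = u /\ kd l = one).

Lemma nsx_spec u : kr (nsx u) = u /\ kd (nsx u) = one.
Proof.
apply: (@epsilon_spec _ (inhabits (kid u)) (fun l => kr l = u /\ kd l = one)).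
exact: hns.
Qed.

Fixpoint zz (j : nat) : kp L :=
  match j with 0 => kid w | j'.+1 => kcomp (zz j') (nsx (ks (zz j'))) end.

Lemma zz_kd j : kd (zz j) = one *+ j.
Proof.
elim: j => [|j IH] /=; first by rewrite kd_id mulr0n.
have [h1 h2] := nsx_spec (ks (zz j)).
by rewrite kd_comp ?h1 // IH h2 mulrSr.
Qed.

Lemma zz_kr j : kr (zz j) = w.
Proof.
elim: j => [|j IH] /=; first by rewrite kr_id.
have [h1 h2] := nsx_spec (ks (zz j)).
by rewrite kr_comp ?h1.
Qed.

Lemma zz_ext J d : exists R, ks (zz J) = kr R /\ zz (J + d) = kcomp (zz J) R.
Proof.
elim: d => [|d [R [h e]]].
  by exists (kid (ks (zz J))); rewrite addn0 kr_id kcomp_idr.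
have [h1 h2] := nsx_spec (ks (zz (J + d))).
exists (kcomp R (nsx (ks (zz (J + d))))); split.
  by rewrite kr_comp // h1 e ks_comp.
rewrite addnS /= -kcompA //; first by rewrite -e.
by rewrite h1 e ks_comp.
Qed.

Definition NN (n : Nk k) : nat := (\sum_(i < k) n i)%N.

Lemma NN_add a b : NN (a + b) = (NN a + NN b)%N.
Proof. by rewrite /NN -big_split /=; apply: eq_bigr => i _; rewrite ffunE. Qed.

Lemma le_split (a b : Nk k) : (forall i, a i <= b i)%N -> exists c, b = a + c.
Proof.
move=> H; exists [ffun i => (b i - a i)%N]; apply/ffunP => i.
by rewrite !ffunE; apply/esym/subnKC.
Qed.

Lemma le_one_NN (a : Nk k) J : (NN a <= J)%N -> exists c, one *+ J = a + c.
Proof.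
move=> H; apply: le_split => i; rewrite ffunMnE ffunE.
rewrite natn; apply: leq_trans H; rewrite /NN (bigD1 i) //= leq_addr //.
Qed.

Lemma pre_zz_stable a J J' : (NN a <= J)%N -> (J <= J')%N ->
  (fact (zz J') a).1 = (fact (zz J) a).1.
Proof.
move=> ha hJ; have [c hc] := le_one_NN ha.
have [R [h e]] := zz_ext J (J' - J).
rewrite subnKC // in e.
by rewrite e (fact_pre_compr (n := c)) // zz_kd.
Qed.

Definition zp n := (fact (zz (NN n)) n).1.

Lemma zp_d n : kd (zp n) = n.
Proof.
have [c hc] := @le_one_NN n (NN n) (leqnn _).
by have [] := fact_spec (etrans (zz_kd _) hc).
Qed.

Lemma zp_pre m n : (fact (zp (m + n)) m).1 = zp m.
Proof.
rewrite /zp.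
have [c hc] := @le_one_NN (m + n) (NN (m + n)) (leqnn _).
have hd := etrans (zz_kd (NN (m + n))) hc.
have [h1 h2 h3 h4] := fact_spec hd.
rewrite -(fact_pre_compr (n := n) h1) ?h2 // -h4.
apply: pre_zz_stable => //.
by rewrite NN_add leq_addr.
Qed.

Definition zpath : ipath L := IPath zp_d zp_pre.

Lemma zpath_rng : rng zpath = w.
Proof.
rewrite /rng /= /zp.
have [c hc] := @le_one_NN 0 (NN 0) (leqnn _).
have hd := etrans (zz_kd (NN 0)) hc.
by rewrite (kr_fact1 hd) zz_kr.
Qed.

End Exist.

Lemma ipath_exists k (L : kgraph k) (hns : no_sources L) (w : kv L) :
  exists x : ipath L, rng x = w.
Proof. by exists (zpath hns w); exact: zpath_rng. Qed.

Section OpAlg.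
Variables (R : comNzRingType) (X : Type).

Record op := Op {
  opf :> (X -> R) -> X -> R;
  opA : forall F G, opf (fun x => F x + G x) = (fun x => opf F x + opf G x);
  opZ : forall a F, opf (fun x => a * F x) = (fun x => a * opf F x) }.

Lemma op_eq (f g : op) : (forall F x, f F x = g F x) -> f = g.
Proof.
case: f => f fA fZ; case: g => g gA gZ /= H.
have e : f = g by apply: boolp.funext => F; apply: boolp.funext => x; exact: H.
subst g; by rewrite (boolp.Prop_irrelevance fA gA) (boolp.Prop_irrelevance fZ gZ).
Qed.

Definition op0 : op.
Proof.
refine (@Op (fun _ _ => 0) _ _) => *; apply: boolp.funext => x; by rewrite ?addr0 ?mulr0.
Defined.

Definition opadd (f g : op) : op.
Proof.
refine (@Op (fun F x => f F x + g F x) _ _) => *; apply: boolp.funext => x.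
  by rewrite opA opA addrACA.
by rewrite opZ opZ mulrDr.
Defined.

Definition opopp (f : op) : op.
Proof.
refine (@Op (fun F x => - f F x) _ _) => *; apply: boolp.funext => x.
  by rewrite opA opprD.
by rewrite opZ mulrN.
Defined.

HB.instance Definition _ := boolp.gen_eqMixin op.
HB.instance Definition _ := boolp.gen_choiceMixin op.

Lemma opaddA : associative opadd.
Proof. by move=> f g h; apply: op_eq => F x /=; rewrite addrA. Qed.
Lemma opaddC : commutative opadd.
Proof. by move=> f g; apply: op_eq => F x /=; rewrite addrC. Qed.
Lemma opadd0 : left_id op0 opadd.
Proof. by move=> f; apply: op_eq => F x /=; rewrite add0r. Qed.
Lemma opaddN : left_inverse op0 opopp opadd.
Proof. by move=> f; apply: op_eq => F x /=; rewrite addNr. Qed.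

HB.instance Definition _ := GRing.isZmodule.Build op opaddA opaddC opadd0 opaddN.

Definition opscale (a : R) (f : op) : op.
Proof.
refine (@Op (fun F x => a * f F x) _ _) => *; apply: boolp.funext => x.
  by rewrite opA mulrDr.
by rewrite opZ mulrCA.
Defined.

Definition opmul (f g : op) : op.
Proof.
refine (@Op (fun F => f (g F)) _ _) => *.
  by rewrite opA opA.
by rewrite opZ opZ.
Defined.

Lemma opscaleA a b f : opscale a (opscale b f) = opscale (a * b) f.
Proof. by apply: op_eq => F x /=; rewrite mulrA. Qed.
Lemma opscale1 f : opscale 1 f = f.
Proof. by apply: op_eq => F x /=; rewrite mul1r. Qed.
Lemma opscaleDr a f g : opscale a (f + g) = opscale a f + opscale a g.
Proof. by apply: op_eq => F x /=; rewrite mulrDr. Qed.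
Lemma opscaleDl a b f : opscale (a + b) f = opscale a f + opscale b f.
Proof. by apply: op_eq => F x /=; rewrite mulrDl. Qed.
Lemma opmulA f g h : opmul f (opmul g h) = opmul (opmul f g) h.
Proof. by apply: op_eq. Qed.
Lemma opmulDl f g h : opmul (f + g) h = opmul f h + opmul g h.
Proof. by apply: op_eq. Qed.
Lemma opmulDr f g h : opmul f (g + h) = opmul f g + opmul f h.
Proof. by apply: op_eq => F x /=; rewrite opA. Qed.
Lemma opmulZl a f g : opmul (opscale a f) g = opscale a (opmul f g).
Proof. by apply: op_eq. Qed.
Lemma opmulZr a f g : opmul f (opscale a g) = opscale a (opmul f g).
Proof. by apply: op_eq => F x /=; rewrite opZ. Qed.

Definition opalg : nalg R :=
  @NAlg R op opscale opmul opscaleA opscale1 opscaleDr opscaleDl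
    opmulA opmulDl opmulDr opmulZl opmulZr.

Lemma op_addE (f g : op) F x : (f + g) F x = f F x + g F x.
Proof. by []. Qed.
Lemma op_0E F x : (0 : op) F x = 0.
Proof. by []. Qed.

Lemma op_sumE (I : Type) (s : seq I) (f : I -> op) F x :
  (\sum_(i <- s) f i) F x = \sum_(i <- s) f i F x.
Proof.
elim: s => [|a s IH]; first by rewrite !big_nil.
by rewrite !big_cons op_addE IH.
Qed.

Definition wop (c : X -> bool) (g : X -> X) : op.
Proof.
refine (@Op (fun F x => if c x then F (g x) else 0) _ _) => *; apply: boolp.funext => x.
  by case: (c x); rewrite ?addr0.
by case: (c x); rewrite ?mulr0.
Defined.

End OpAlg.

Lemma zidem0 (V : zmodType) (y : V) : y = y + y -> y = 0.
Proof. by move=> H; apply: (addIr y); rewrite add0r -H. Qed.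

Section NalgLemmas.
Variables (R : comNzRingType) (A : nalg R).

Lemma nmulr0 (x : A) : nmul A x 0 = 0.
Proof. by have H := @nmulDr _ A x 0 0; rewrite addr0 in H; exact: zidem0. Qed.
Lemma nmul0r (x : A) : nmul A 0 x = 0.
Proof. by have H := @nmulDl _ A 0 0 x; rewrite addr0 in H; exact: zidem0. Qed.
Lemma nscaler0 a : nscale A a 0 = 0.
Proof. by have H := @nscaleDr _ A a 0 0; rewrite addr0 in H; exact: zidem0. Qed.
Lemma nscale0r (x : A) : nscale A 0 x = 0.
Proof. by have H := @nscaleDl _ A 0 0 x; rewrite addr0 in H; exact: zidem0. Qed.

Lemma hom0 (B : nalg R) (f : A -> B) : nalg_hom f -> f 0 = 0.
Proof.
case=> hA _ _; apply: zidem0; by rewrite -hA addr0.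
Qed.

End NalgLemmas.

Lemma sum_if_eq (R : comNzRingType) (T : eqType) (s : seq T) a (c : R) : uniq s ->
  \sum_(l <- s) (if a == l then c else 0) = if a \in s then c else 0.
Proof.
elim: s => [|b s IH]; first by rewrite big_nil.
rewrite big_cons /= in_cons => /andP [hb hu]; rewrite IH //.
case: eqP => [->|_] /=; last by rewrite add0r.
by rewrite (negbTE hb) addr0.
Qed.

Arguments wop {R X} c g.

Section IPRep.
Variables (R : comNzRingType) (k : nat) (L : kgraph k).

Local Notation X := (ipath L).
Local Notation A := (opalg R X).

Definition Pop (v : kv L) : op R X := wop (fun x : X => rng x == v) id.
Definition Sop (l : kp L) : op R X :=
  wop (fun y : X => ip y (kd l) == l) (fun y => shift y (kd l)).
Definition Tst (l : kp L) : op R X :=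
  wop (fun x : X => rng x == ks l) (fun x => concat l x).

Definition PP v : A := Pop v.
Definition SS l : A := if kd l == 0 then Pop (kr l) else Sop l.
Definition TT l : A := if kd l == 0 then Pop (kr l) else Tst l.

Lemma wop_mul c g c' g' :
  opmul (@wop R X c g) (wop c' g') = wop (fun x => c x && c' (g x)) (fun x => g' (g x)).
Proof. by apply: op_eq => F x /=; case: (c x). Qed.

Lemma ip_comp_eq (y : X) l m : ks l = kr m ->
  (ip y (kd l + kd m) == kcomp l m) = (ip y (kd l) == l) && (ip (shift y (kd l)) (kd m) == m).
Proof.
move=> h; have [hs e] := ip_shift_decomp y (kd l) (kd m).
rewrite e; apply/eqP/andP => [E|[/eqP -> /eqP ->]] //.
have [] := kfact_uniq hs h _ E; first by rewrite ip_d.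
by move=> -> ->.
Qed.

Lemma ip_rng (y : X) l : ip y (kd l) = l -> rng y = kr l.
Proof. by move=> <-; rewrite kr_ip. Qed.

Lemma IP_family : KP_family PP SS TT.
Proof.
split.
- move=> v; rewrite /SS /TT kd_id eqxx kr_id //.
- split=> [v|v w hvw]; apply: op_eq => F x /=.
    by case: eqP.
  by case: eqP => // ->; case: eqP.
- split.
    move=> l m hl hm hlm; rewrite /SS /TT (negbTE hl) (negbTE hm).
    have hlm0 : kd (kcomp l m) != 0.
      rewrite kd_comp //; apply: contra hl => /eqP H; apply/eqP/ffunP => i.
      by have := congr1 (fun f : Nk k => f i) H; rewrite !ffunE; case: (kd l i).
    rewrite (negbTE hlm0); split.
      rewrite /= /Sop /Tst wop_mul; apply: op_eq => F y /=.
      by rewrite kd_comp // ip_comp_eq // shift_shift.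
    rewrite /= /Sop /Tst wop_mul; apply: op_eq => F x /=.
    rewrite ks_comp //; case: eqP => //= hx.
    by rewrite rng_concat // hlm eqxx concat_concat.
  move=> l hl; rewrite /SS /TT (negbTE hl); split.
  + rewrite /= /PP /Pop /Sop /Tst wop_mul; apply: op_eq => F y /=.
    by case: (ip y (kd l) =P l) => [h|_]; rewrite ?andbF // (ip_rng h) eqxx.
  + rewrite /= /PP /Pop /Sop /Tst wop_mul; apply: op_eq => F y /=.
    by case: eqP => //= h; rewrite rng_shift h eqxx.
  + rewrite /= /PP /Pop /Sop /Tst wop_mul; apply: op_eq => F y /=.
    by rewrite andbb.
  + rewrite /= /PP /Pop /Sop /Tst wop_mul; apply: op_eq => F y /=.
    by case: eqP => //= h; rewrite rng_concat // eqxx.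
- move=> l m hl hlm; have hm : kd m != 0 by rewrite -hlm.
  rewrite /SS /TT (negbTE hl) (negbTE hm) /= /Sop /Tst wop_mul.
  apply: op_eq => F x /=.
  rewrite -hlm; case: (rng x =P ks l) => [h|h] /=.
    rewrite concat_at // shift_concat //.
    by case: (l =P m) => [E|ne] //=; rewrite h eqxx.
  by case: (l =P m) => //= _; case: eqP.
- move=> v n hn s hu hs; apply: op_eq => F x.
  rewrite op_sumE.
  rewrite (eq_big_seq (fun l => if ip x n == l then F x else 0)); last first.
    move=> l; rewrite hs => -[hr hd].
    rewrite /SS /TT hd (negbTE hn) /= hd.
    by case: eqP => [E|] //; rewrite -E rng_shift eqxx concat_shift.
  rewrite sum_if_eq //= /PP /Pop /=.
  have := hs (ip x n); rewrite kr_ip ip_d.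
  case: (ip x n \in s) => -[h1 h2]; case: eqP => // E.
    by have := h1 isT => -[].
  by have := h2 (conj E erefl).
Qed.

End IPRep.

Lemma universal_p_neq0 (R : comNzRingType) k (L : kgraph k) (hns : no_sources L)
    (B : nalg R) (p : kv L -> B) (s sst : kp L -> B) :
  KP_universal p s sst -> forall v, p v != 0.
Proof.
move=> [_ hU] v; have [phi [hphi hp _ _ _]] := hU _ _ _ _ (@IP_family R k L).
apply/eqP => e; have := hp v; rewrite e hom0 // => E.
have [x hx] := ipath_exists hns v.
have := congr1 (fun f : op R (ipath L) => f (fun _ => 1) x) E.
rewrite /= /PP /Pop /= hx eqxx => /esym/eqP; by rewrite oner_eq0.
Qed.

Section OneTwo.
Variables (R : comNzRingType) (k : nat) (L : kgraph k) (hns : no_sources L).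
Variables (B : nalg R) (p : kv L -> B) (s sst : kp L -> B).
Hypothesis hB : KP_universal p s sst.

Lemma one_to_two : nalg_commutative B ->
  (forall l : kp L, kr l = ks l) /\
  (forall (n : Nk k) (l m : kp L), kd l = n -> kd m = n -> kr l = kr m -> l = m).
Proof.
move=> hC.
have [hF _] := hB; case: hF => hv [hP1 hP2] [hK2 hK2'] hK3 hK4.
have hp := universal_p_neq0 hns hB.
have H1 : forall l : kp L, kr l = ks l.
  move=> l; case: (eqVneq (kd l) 0) => [h0|hl].
    by rewrite (kd0_id h0) kr_id ks_id.
  case: (kr l =P ks l) => // ne; exfalso.
  have [a b c d] := hK2' l hl.
  have e1 : s l = 0.
    rewrite -b -{1}a (hC (p (kr l)) (s l)) -nmulA hP2 ?nmulr0 //.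
  have := hK3 l l hl erefl; rewrite eqxx e1 nmulr0 => /esym E.
  by have := hp (ks l); rewrite E eqxx.
split => // n l m hl hm hr; case: (l =P m) => // ne; exfalso.
case: (eqVneq n 0) => [n0|nn0].
  apply: ne; rewrite (kd0_id (etrans hl n0)) (kd0_id (etrans hm n0)) hr //.
have hl0 : kd l != 0 by rewrite hl.
have hm0 : kd m != 0 by rewrite hm.
have E : nmul B (sst l) (s m) = 0.
  by rewrite (hK3 l m hl0 (etrans hl (esym hm))); case: eqP.
have hv' : ks m = ks l by rewrite -!H1 hr.
have pl : p (ks l) = nmul B (sst l) (s l) by rewrite (hK3 l l hl0 erefl) eqxx.
have pm : p (ks l) = nmul B (sst m) (s m) by rewrite (hK3 m m hm0 erefl) eqxx hv'.
have Z : nmul B (nmul B (sst l) (s l)) (nmul B (sst m) (s m)) = 0.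
  rewrite nmulA -(nmulA (sst l) (s l) (sst m)).
  rewrite (hC (sst l) (nmul B (s l) (sst m))) -nmulA E nmulr0 //.
have := hp (ks l); rewrite -(hP1 (ks l)) {1}pl pm Z eqxx //.
Qed.

End OneTwo.

Definition upath k (L : kgraph k) (v : kv L) (n : Nk k) : kp L :=
  epsilon (inhabits (kid v)) (fun l : kp L => kr l = v /\ kd l = n).

Lemma upath_spec k (L : kgraph k) (hns : no_sources L) (v : kv L) (n : Nk k) :
  kr (upath v n) = v /\ kd (upath v n) = n.
Proof.
apply: (@epsilon_spec _ (inhabits (kid v)) (fun l : kp L => kr l = v /\ kd l = n)).
exact: hns.
Qed.

Lemma two_to_three k (L : kgraph k) (hns : no_sources L) :
  (forall l : kp L, kr l = ks l) /\
  (forall (n : Nk k) (l m : kp L), kd l = n -> kd m = n -> kr l = kr m -> l = m) ->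
  kgraph_iso L (disjoint_union_Nk k (kv L)).
Proof.
move=> [H1 H2].
exists id, (fun l => (kr l, kd l)); split.
- split; first by exists id.
  exists (fun x : kv L * Nk k => upath x.1 x.2) => [l|[v n]] /=.
    have [h1 h2] := upath_spec hns (kr l) (kd l).
    exact: (H2 (kd l)).
  by have [-> ->] := upath_spec hns v n.
- split => l //=; exact: esym (H1 l).
- by move=> v /=; rewrite kr_id kd_id.
- by move=> l m h /=; rewrite kr_comp // kd_comp.
- by [].
Qed.

Lemma three_to_two k (L : kgraph k) :
  kgraph_iso L (disjoint_union_Nk k (kv L)) ->
  (forall l : kp L, kr l = ks l) /\
  (forall (n : Nk k) (l m : kp L), kd l = n -> kd m = n -> kr l = kr m -> l = m).
Proof.
move=> [fv [fp [[bv bp] [hr hs] hid hcomp hd]]].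
have iv := bij_inj bv; have ip' := bij_inj bp.
have Efp : forall l, fp l = (fv (kr l), kd l).
  move=> l; rewrite -hr -hd; by case: (fp l).
split.
  move=> l; apply: iv; rewrite -hr -hs //.
move=> n l m hl hm hrm; apply: ip'; by rewrite !Efp hl hm hrm.
Qed.

Lemma laurent_mulC (R : comNzRingType) k (f g : laurent R k) :
  laurent_mul f g = laurent_mul g f.
Proof.
rewrite /laurent_mul exchange_big; apply: eq_bigr => a _; apply: eq_bigr => b _.
by rewrite mulrC addrC.
Qed.

Lemma laurent_mul0l (R : comNzRingType) k (g : laurent R k) : laurent_mul 0 g = 0.
Proof. by rewrite /laurent_mul msupp0 big_seq_fset0. Qed.

Lemma laurent_mul0r (R : comNzRingType) k (g : laurent R k) : laurent_mul g 0 = 0.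
Proof. by rewrite laurent_mulC laurent_mul0l. Qed.

Lemma dsum_mulE (R : comNzRingType) k (V : countType) (f g : laurent_dsum R k V) v :
  (dsum_mul f g)@_v = laurent_mul f@_v g@_v.
Proof.
rewrite /dsum_mul mcoeffE; case: ifP => // /negbT h.
by rewrite (mcoeff_outdom h) laurent_mul0l.
Qed.

Lemma dsum_mulC (R : comNzRingType) k (V : countType) (f g : laurent_dsum R k V) :
  dsum_mul f g = dsum_mul g f.
Proof. by apply/malgP => v; rewrite !dsum_mulE laurent_mulC. Qed.

Lemma four_to_one (R : comNzRingType) k (V : countType) (B : nalg R) :
  iso_to_laurent_dsum k V B -> nalg_commutative B.
Proof.
move=> [phi [bphi _ _ hmul]] x y; apply: (bij_inj bphi).
by rewrite !hmul dsum_mulC.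
Qed.

Section Rel.
Variables (R : comNzRingType) (k : nat) (L : kgraph k) (hns : no_sources L).
Hypothesis H1 : forall l : kp L, kr l = ks l.
Hypothesis H2 : forall (n : Nk k) (l m : kp L), kd l = n -> kd m = n -> kr l = kr m -> l = m.
Variables (B : nalg R) (p : kv L -> B) (s sst : kp L -> B).
Hypothesis hF : KP_family p s sst.

Set Default Proof Using "hns H1 H2".
Local Notation u := (@upath k L).

Lemma u_kr v n : kr (u v n) = v. Proof. by have [] := upath_spec hns v n. Qed.
Lemma u_kd v n : kd (u v n) = n. Proof. by have [] := upath_spec hns v n. Qed.
Lemma u_ks v n : ks (u v n) = v. Proof. by rewrite -H1 u_kr. Qed.
Lemma u_eq l : u (kr l) (kd l) = l.
Proof. by apply: (@H2 (kd l)); rewrite ?u_kd ?u_kr. Qed.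
Lemma u0 v : u v 0 = kid v.
Proof. by rewrite (kd0_id (u_kd v 0)) u_kr. Qed.
Lemma u_add v m n : kcomp (u v m) (u v n) = u v (m + n).
Proof.
have h : ks (u v m) = kr (u v n) by rewrite u_ks u_kr.
apply: (@H2 (m + n)); rewrite ?u_kd ?kd_comp ?u_kd ?kr_comp ?u_kr ?u_ks //.
Qed.

Set Default Proof Using "hns H1 H2 hF".
Local Notation sv v n := (s (u v n)).
Local Notation tv v n := (sst (u v n)).

Let hv : forall v, s (kid v) = p v /\ sst (kid v) = p v.
Proof. by case: hF. Qed.
Let hP1 : forall v, nmul B (p v) (p v) = p v.
Proof. by case: hF => _ []. Qed.
Let hP2 : forall v w, v <> w -> nmul B (p v) (p w) = 0.
Proof. by case: hF => _ []. Qed.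
Let hK2 : forall l m, kd l != 0 -> kd m != 0 -> ks l = kr m ->
         nmul B (s l) (s m) = s (kcomp l m) /\ nmul B (sst m) (sst l) = sst (kcomp l m).
Proof. by case: hF => _ _ []. Qed.
Let hK2' : forall l, kd l != 0 ->
         [/\ nmul B (p (kr l)) (s l) = s l, nmul B (s l) (p (ks l)) = s l,
             nmul B (p (ks l)) (sst l) = sst l & nmul B (sst l) (p (kr l)) = sst l].
Proof. by case: hF => _ _ []. Qed.
Let hK3 : forall l m, kd l != 0 -> kd l = kd m ->
         nmul B (sst l) (s m) = if l == m then p (ks l) else 0.
Proof. by case: hF. Qed.
Let hK4 : forall (v : kv L) (n : Nk k), n != 0 ->
         forall s0 : seq (kp L), uniq s0 ->
           (forall l, l \in s0 <-> (kr l = v /\ kd l = n)) ->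
           p v = \sum_(l <- s0) nmul B (s l) (sst l).
Proof. by case: hF. Qed.

Lemma sv0 v : sv v 0 = p v. Proof. by rewrite u0; case: (hv v). Qed.
Lemma tv0 v : tv v 0 = p v. Proof. by rewrite u0; case: (hv v). Qed.

Lemma pS v n : nmul B (p v) (sv v n) = sv v n.
Proof.
case: (eqVneq n 0) => [->|hn]; first by rewrite sv0 hP1.
have hn' : kd (u v n) != 0 by rewrite u_kd.
by have [a _ _ _] := hK2' hn'; rewrite u_kr in a.
Qed.
Lemma Sp v n : nmul B (sv v n) (p v) = sv v n.
Proof.
case: (eqVneq n 0) => [->|hn]; first by rewrite sv0 hP1.
have hn' : kd (u v n) != 0 by rewrite u_kd.
by have [_ a _ _] := hK2' hn'; rewrite u_ks in a.
Qed.
Lemma pT v n : nmul B (p v) (tv v n) = tv v n.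
Proof.
case: (eqVneq n 0) => [->|hn]; first by rewrite tv0 hP1.
have hn' : kd (u v n) != 0 by rewrite u_kd.
by have [_ _ a _] := hK2' hn'; rewrite u_ks in a.
Qed.
Lemma Tp v n : nmul B (tv v n) (p v) = tv v n.
Proof.
case: (eqVneq n 0) => [->|hn]; first by rewrite tv0 hP1.
have hn' : kd (u v n) != 0 by rewrite u_kd.
by have [_ _ _ a] := hK2' hn'; rewrite u_kr in a.
Qed.

Lemma R1 v m n : nmul B (sv v m) (sv v n) = sv v (m + n).
Proof.
case: (eqVneq m 0) => [->|hm]; first by rewrite sv0 pS add0r.
case: (eqVneq n 0) => [->|hn]; first by rewrite sv0 Sp addr0.
have h : ks (u v m) = kr (u v n) by rewrite u_ks u_kr.
have h1 : kd (u v m) != 0 by rewrite u_kd.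
have h2 : kd (u v n) != 0 by rewrite u_kd.
by have [-> _] := hK2 h1 h2 h; rewrite u_add.
Qed.

Lemma R2 v m n : nmul B (tv v n) (tv v m) = tv v (m + n).
Proof.
case: (eqVneq m 0) => [->|hm]; first by rewrite tv0 Tp add0r.
case: (eqVneq n 0) => [->|hn]; first by rewrite tv0 pT addr0.
have h : ks (u v m) = kr (u v n) by rewrite u_ks u_kr.
have h1 : kd (u v m) != 0 by rewrite u_kd.
have h2 : kd (u v n) != 0 by rewrite u_kd.
by have [_ ->] := hK2 h1 h2 h; rewrite u_add.
Qed.

Lemma R3 v n : nmul B (tv v n) (sv v n) = p v.
Proof.
case: (eqVneq n 0) => [->|hn]; first by rewrite sv0 tv0 hP1.
by rewrite hK3 ?u_kd // eqxx u_ks.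
Qed.

Lemma R4 v n : nmul B (sv v n) (tv v n) = p v.
Proof.
case: (eqVneq n 0) => [->|hn]; first by rewrite sv0 tv0 hP1.
rewrite (hK4 hn (s0 := [:: u v n])) ?big_seq1 //.
move=> l; rewrite inE; split => [/eqP ->|[<- <-]]; first by rewrite u_kr u_kd.
by rewrite u_eq.
Qed.

Lemma R9 v m n : nmul B (sv v n) (tv v m) = nmul B (tv v m) (sv v n).
Proof.
by rewrite -{1}(pS v n) -(R3 v m) -(nmulA (tv v m)) R1 addrC -R1 -!nmulA R4 Sp.
Qed.

Lemma Rshift v x y c :
  nmul B (sv v (x + c)) (tv v (y + c)) = nmul B (sv v x) (tv v y).
Proof.
rewrite -R1 -R2 -nmulA (nmulA (sv v c)) R4.
by rewrite nmulA Sp.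
Qed.

Lemma R8 v x y x' y' : x + y' = x' + y ->
  nmul B (sv v x) (tv v y) = nmul B (sv v x') (tv v y').
Proof.
by move=> e; rewrite -(Rshift v x y y') -(Rshift v x' y' y) e (addrC y').
Qed.

Lemma Rorth v w x y x' y' : v != w ->
  nmul B (nmul B (sv v x) (tv v y)) (nmul B (sv w x') (tv w y')) = 0.
Proof.
move=> ne; rewrite -(Tp v y) -(pS w x') !nmulA -(nmulA _ (p v) (p w)) hP2.
  by rewrite nmulr0 !nmul0r.
by apply/eqP.
Qed.

End Rel.
Unset Default Proof Using.

Definition pz (x : int) : nat := match x with Posz n => n | Negz _ => 0 end.
Definition nz (x : int) : nat := match x with Posz _ => 0 | Negz n => n.+1 end.
Lemma pz_nz x : x = (pz x)%:Z - (nz x)%:Z.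
Proof. case: x => n /=; first by rewrite subr0. by rewrite NegzE sub0r. Qed.

Definition posv k (a : Zk k) : Nk k := [ffun i => pz (a i)].
Definition negv k (a : Zk k) : Nk k := [ffun i => nz (a i)].
Definition emb k (n : Nk k) : Zk k := [ffun i => (n i)%:Z].

Lemma sum_if_eqG (R : comNzRingType) (B : nalg R) (T : eqType) (s : seq T) a (G : T -> B) :
  uniq s -> \sum_(l <- s) (if a == l then G l else 0) = if a \in s then G a else 0.
Proof.
elim: s => [|b s IH]; first by rewrite big_nil.
rewrite big_cons /= in_cons => /andP [hb hu]; rewrite IH //.
case: eqP => [->|_] /=; last by rewrite add0r.
by rewrite (negbTE hb) addr0.
Qed.

Section NalgSums.
Variables (R : comNzRingType) (A : nalg R).

Lemma nmul_suml (I : Type) (r : seq I) (F : I -> A) (y : A) :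
  nmul A (\sum_(i <- r) F i) y = \sum_(i <- r) nmul A (F i) y.
Proof.
elim: r => [|a r IH]; first by rewrite !big_nil nmul0r.
by rewrite !big_cons nmulDl IH.
Qed.

Lemma nmul_sumr (I : Type) (r : seq I) (F : I -> A) (y : A) :
  nmul A y (\sum_(i <- r) F i) = \sum_(i <- r) nmul A y (F i).
Proof.
elim: r => [|a r IH]; first by rewrite !big_nil nmulr0.
by rewrite !big_cons nmulDr IH.
Qed.

Lemma nscale_sum (I : Type) (r : seq I) (F : I -> A) c :
  nscale A c (\sum_(i <- r) F i) = \sum_(i <- r) nscale A c (F i).
Proof.
elim: r => [|a r IH]; first by rewrite !big_nil nscaler0.
by rewrite !big_cons nscaleDr IH.
Qed.

Lemma hom_sum (B : nalg R) (f : A -> B) (I : Type) (r : seq I) (F : I -> A) :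
  nalg_hom f -> f (\sum_(i <- r) F i) = \sum_(i <- r) f (F i).
Proof.
move=> hf; elim: r => [|a r IH]; first by rewrite !big_nil hom0.
by case: hf => hA _ _; rewrite !big_cons hA IH.
Qed.

End NalgSums.

Section Psi.
Variables (R : comNzRingType) (k : nat) (L : kgraph k) (hns : no_sources L).
Hypothesis H1 : forall l : kp L, kr l = ks l.
Hypothesis H2 : forall (n : Nk k) (l m : kp L), kd l = n -> kd m = n -> kr l = kr m -> l = m.
Variables (B : nalg R) (p : kv L -> B) (s sst : kp L -> B).
Hypothesis hF : KP_family p s sst.

Set Default Proof Using "hns H1 H2 hF".
Local Notation u := (@upath k L).
Local Notation sv v n := (s (u v n)).
Local Notation tv v n := (sst (u v n)).
Local Notation V := (kv L).

Definition Tm (v : V) (a : Zk k) : B := nmul B (sv v (posv a)) (tv v (negv a)).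

Lemma Tm_mul v a b : nmul B (Tm v a) (Tm v b) = Tm v (a + b).
Proof.
rewrite /Tm -nmulA (nmulA (tv v (negv a))) -(R9 hns H1 H2 hF) -nmulA nmulA.
rewrite (R1 hns H1 H2 hF) (R2 hns H1 H2 hF).
apply: (R8 hns H1 H2 hF); apply/ffunP => i; rewrite !ffunE /=.
have := pz_nz (a i); have := pz_nz (b i); have := pz_nz (a i + b i); lia.
Qed.

Lemma posv0 : posv (0 : Zk k) = 0. Proof. by apply/ffunP => i; rewrite !ffunE. Qed.
Lemma negv0 : negv (0 : Zk k) = 0. Proof. by apply/ffunP => i; rewrite !ffunE. Qed.

Lemma Tm0 v : Tm v 0 = p v.
Proof.
rewrite /Tm posv0 negv0 (sv0 hns H1 H2 hF) (tv0 hns H1 H2 hF).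
by case: hF => _ [].
Qed.

Lemma Tm_mulE v w a b :
  nmul B (Tm v a) (Tm w b) = if v == w then Tm v (a + b) else 0.
Proof.
case: eqP => [<-|ne]; first exact: Tm_mul.
by apply: (Rorth hns H1 H2 hF); apply/eqP.
Qed.

Definition psiv (v : V) (h : laurent R k) : B :=
  \sum_(a <- msupp h) nscale B h@_a (Tm v a).

Definition psi (f : laurent_dsum R k V) : B :=
  \sum_(v <- msupp f) psiv v f@_v.

Lemma psiv_w v h (dom : {fset Zk k}) : (msupp h `<=` dom)%fset ->
  psiv v h = \sum_(a <- dom) nscale B h@_a (Tm v a).
Proof.
move=> hd; rewrite /psiv; apply: big_fset_incl => // a _ ha.
by rewrite (mcoeff_outdom ha) nscale0r.
Qed.

Lemma psiv0 v : psiv v 0 = 0.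
Proof. by rewrite /psiv msupp0 big_seq_fset0. Qed.

Lemma psivD v h1 h2 : psiv v (h1 + h2) = psiv v h1 + psiv v h2.
Proof.
set d := (msupp h1 `|` msupp h2)%fset.
rewrite (@psiv_w v (h1 + h2) d) ?msuppD_le // (@psiv_w v h1 d) ?fsubsetUl //.
rewrite (@psiv_w v h2 d) ?fsubsetUr // -big_split /=.
by apply: eq_bigr => a _; rewrite mcoeffD nscaleDl.
Qed.

Lemma psivZ v c h : psiv v (c *: h) = nscale B c (psiv v h).
Proof.
rewrite (@psiv_w v (c *: h) (msupp h)) ?msuppZ_le // /psiv nscale_sum.
by apply: eq_bigr => a _; rewrite mcoeffZ nscaleA.
Qed.

Lemma psivU v c a : psiv v << c *g a >> = nscale B c (Tm v a).
Proof.
by rewrite (@psiv_w v _ [fset a]%fset) ?msuppU_le // big_seq_fset1 mcoeffUU.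
Qed.

Lemma psiv_sum v (I : Type) (r : seq I) (F : I -> laurent R k) :
  psiv v (\sum_(i <- r) F i) = \sum_(i <- r) psiv v (F i).
Proof.
elim: r => [|a r IH]; first by rewrite !big_nil psiv0.
by rewrite !big_cons psivD IH.
Qed.

Lemma psi_w f (dom : {fset V}) : (msupp f `<=` dom)%fset ->
  psi f = \sum_(v <- dom) psiv v f@_v.
Proof.
move=> hd; rewrite /psi; apply: big_fset_incl => // a _ ha.
by rewrite (mcoeff_outdom ha) psiv0.
Qed.

Lemma psi0 : psi 0 = 0.
Proof. by rewrite /psi msupp0 big_seq_fset0. Qed.

Lemma psiD f g : psi (f + g) = psi f + psi g.
Proof.
set d := (msupp f `|` msupp g)%fset.
rewrite (@psi_w (f + g) d) ?msuppD_le // (@psi_w f d) ?fsubsetUl //.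
rewrite (@psi_w g d) ?fsubsetUr // -big_split /=.
by apply: eq_bigr => a _; rewrite mcoeffD psivD.
Qed.

Lemma msupp_malg_in (K : choiceType) (G : zmodType) (d : {fset K}) (E : K -> G) :
  (msupp [malg x in d => E x] `<=` d)%fset.
Proof.
apply/fsubsetP => x; rewrite -mcoeff_neq0 mcoeffE.
by case: ifP => //; rewrite eqxx.
Qed.

Lemma dsum_scaleE c (f : laurent_dsum R k V) v : (dsum_scale c f)@_v = c *: f@_v.
Proof.
rewrite /dsum_scale mcoeffE; case: ifP => // /negbT h.
by rewrite (mcoeff_outdom h) scaler0.
Qed.

Lemma psiZ c f : psi (dsum_scale c f) = nscale B c (psi f).
Proof.
rewrite (@psi_w _ (msupp f)) ?msupp_malg_in // /psi nscale_sum.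
by apply: eq_bigr => v _; rewrite dsum_scaleE psivZ.
Qed.

Lemma psiU h v : psi << h *g v >> = psiv v h.
Proof.
by rewrite (@psi_w _ [fset v]%fset) ?msuppU_le // big_seq_fset1 mcoeffUU.
Qed.

Lemma psi_sum (I : Type) (r : seq I) (F : I -> laurent_dsum R k V) :
  psi (\sum_(i <- r) F i) = \sum_(i <- r) psi (F i).
Proof.
elim: r => [|a r IH]; first by rewrite !big_nil psi0.
by rewrite !big_cons psiD IH.
Qed.

Lemma psiv_lm v h1 h2 :
  psiv v (laurent_mul h1 h2) =
  \sum_(a <- msupp h1) \sum_(b <- msupp h2) nscale B (h1@_a * h2@_b) (Tm v (a + b)).
Proof.
rewrite /laurent_mul psiv_sum; apply: eq_bigr => a _.
rewrite psiv_sum; apply: eq_bigr => b _; exact: psivU.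
Qed.

Lemma psiv_mul v w h1 h2 :
  nmul B (psiv v h1) (psiv w h2) = if v == w then psiv v (laurent_mul h1 h2) else 0.
Proof.
case: eqP => [<-|ne].
  rewrite psiv_lm /psiv nmul_suml; apply: eq_bigr => a _.
  rewrite nmul_sumr; apply: eq_bigr => b _.
  by rewrite nmulZl nmulZr nscaleA Tm_mul mulrC.
rewrite /psiv nmul_suml big1 // => a _; rewrite nmul_sumr big1 // => b _.
by rewrite nmulZl nmulZr Tm_mulE; case: eqP => // _; rewrite !nscaler0.
Qed.

Lemma psiM f g : psi (dsum_mul f g) = nmul B (psi f) (psi g).
Proof.
rewrite (@psi_w _ (msupp f)) ?msupp_malg_in //.
rewrite {2}/psi nmul_suml; apply: eq_bigr => v _.
rewrite /psi nmul_sumr.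
under eq_bigr => w _ do rewrite psiv_mul.
rewrite sum_if_eqG ?fset_uniq // dsum_mulE.
case: ifP => // /negbT h.
by rewrite (mcoeff_outdom h) laurent_mul0r psiv0.
Qed.

End Psi.
Unset Default Proof Using.

Lemma sum_if_eqZ (V : zmodType) (T : eqType) (s : seq T) a (G : T -> V) :
  uniq s -> \sum_(l <- s) (if a == l then G l else 0) = if a \in s then G a else 0.
Proof.
elim: s => [|b s IH]; first by rewrite big_nil.
rewrite big_cons /= in_cons => /andP [hb hu]; rewrite IH //.
case: eqP => [->|_] /=; last by rewrite add0r.
by rewrite (negbTE hb) addr0.
Qed.

Lemma emb0 k : emb (0 : Nk k) = 0. Proof. by apply/ffunP => i; rewrite !ffunE. Qed.
Lemma embD k (m n : Nk k) : emb (m + n) = emb m + emb n.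
Proof. by apply/ffunP => i; rewrite !ffunE. Qed.

Section Rep.
Variables (R : comNzRingType) (k : nat) (L : kgraph k) (hns : no_sources L).
Hypothesis H1 : forall l : kp L, kr l = ks l.
Hypothesis H2 : forall (n : Nk k) (l m : kp L), kd l = n -> kd m = n -> kr l = kr m -> l = m.

Local Notation V := (kv L).
Local Notation X := (kv L * Zk k)%type.
Local Notation A := (opalg R X).
Local Notation u := (@upath k L).

Definition Pr (v : V) : A := wop (fun x : X => x.1 == v) id.
Definition Sr (l : kp L) : A := wop (fun x : X => x.1 == kr l) (fun x => (x.1, x.2 - emb (kd l))).
Definition Tr (l : kp L) : A := wop (fun x : X => x.1 == kr l) (fun x => (x.1, x.2 + emb (kd l))).

Lemma seq_single v n (s0 : seq (kp L)) : uniq s0 ->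
  (forall l, l \in s0 <-> (kr l = v /\ kd l = n)) -> s0 = [:: u v n].
Proof.
move=> hu hs.
have mem : forall l, l \in s0 <-> l = u v n.
  move=> l; rewrite hs; split => [[h1 h2]|->].
    apply: (@H2 n); rewrite ?(u_kd hns H1 H2) ?(u_kr hns H1 H2) //.
  by rewrite (u_kd hns H1 H2) (u_kr hns H1 H2).
clear hs; case: s0 hu mem => [|a s'] hu mem; first by have := proj2 (mem (u v n)) erefl.
have ea : a = u v n by apply/mem; rewrite inE eqxx.
case: s' hu mem => [|b s''] hu mem; first by rewrite ea.
have eb : b = u v n by apply/mem; rewrite !inE eqxx orbT.
by move: hu; rewrite /= inE ea eb eqxx.
Qed.

Lemma Rep_family : KP_family Pr Sr Tr.
Proof.
split.
- move=> v; split; apply: op_eq => F x /=;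
    by rewrite kr_id kd_id emb0 ?subr0 ?addr0 -surjective_pairing.
- split=> [v|v w hvw]; apply: op_eq => F x /=; first by case: eqP.
  by case: eqP => // ->; case: eqP.
- split.
    move=> l m hl hm hlm; have hkm : kr m = kr l by rewrite -hlm H1.
    split; apply: op_eq => F x /=; rewrite kr_comp // kd_comp // embD hkm;
      case: eqP => //= _.
      by rewrite opprD addrA.
    by rewrite (addrC (emb (kd l))) addrA.
  move=> l hl; split; apply: op_eq => F x /=; rewrite -?H1;
    by case: eqP => //= _; rewrite ?eqxx //= -?surjective_pairing.
- move=> l m hl hlm; apply: op_eq => F x /=.
  rewrite hlm addrK -surjective_pairing.
  case: (l =P m) => [<-|ne] /=; first by rewrite -H1; case: eqP.
  case: eqP => //= h1; case: eqP => //= h2; case: ne.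
  by apply: (@H2 (kd m)); rewrite -?h1 -?h2.
- move=> v n hn s0 hu hs; rewrite (seq_single hu hs) big_seq1.
  apply: op_eq => F x /=; rewrite (u_kr hns H1 H2).
  by case: eqP => //= _; rewrite subrK -surjective_pairing.
Qed.

Lemma emb_posneg (a : Zk k) : emb (posv a) - emb (negv a) = a.
Proof. by apply/ffunP => i; rewrite !ffunE /= -pz_nz. Qed.

Variables (B : nalg R) (p : kv L -> B) (s sst : kp L -> B).
Hypothesis hB : KP_universal p s sst.

Let hF : KP_family p s sst. Proof. by case: hB. Qed.

Lemma psi_inj : injective (psi s sst).
Proof.
have [rho [hrho hp hs hsst _]] := (proj2 hB) _ _ _ _ Rep_family.
have rhoT : forall v a F (x : X),
    rho (Tm s sst v a) F x = if x.1 == v then F (x.1, x.2 - a) else 0.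
  move=> v a F x; case: hrho => _ _ hM; rewrite /Tm hM hs hsst /=.
  rewrite !(u_kr hns H1 H2) !(u_kd hns H1 H2); case: eqP => //= _.
  by rewrite -[in RHS](emb_posneg a) opprB addrA addrAC.
have rhoPsi : forall f F (x : X), rho (psi s sst f) F x =
    \sum_(v <- msupp f) \sum_(a <- msupp f@_v) f@_v@_a * (if x.1 == v then F (x.1, x.2 - a) else 0).
  move=> f F x; rewrite /psi (hom_sum _ _ hrho) op_sumE; apply: eq_bigr => v _.
  rewrite /psiv (hom_sum _ _ hrho) op_sumE; apply: eq_bigr => a _.
  by case: hrho => _ hZ _; rewrite hZ /= rhoT.
have coef : forall f w b, rho (psi s sst f) (fun y : X => if y == (w, 0) then 1 else 0) (w, b)
    = (f@_w)@_b.
  move=> f w b; rewrite rhoPsi /=.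
  rewrite (eq_bigr (fun v => if w == v then f@_v@_b else 0)); last first.
    move=> v _.
    rewrite (eq_bigr (fun a => if w == v then (if b == a then f@_v@_a else 0) else 0)); last first.
      move=> a _; case: eqP => //= _; last by rewrite mulr0.
      rewrite xpair_eqE eqxx /= subr_eq0.
      by case: eqP; rewrite ?mulr1 ?mulr0.
    case: eqP => [<-|_]; last by rewrite big1.
    rewrite sum_if_eqZ ?fset_uniq //; case: ifP => // /negbT h.
    by rewrite (mcoeff_outdom h).
  rewrite sum_if_eqZ ?fset_uniq //; case: ifP => // /negbT h.
  by rewrite (mcoeff_outdom h) mcoeff0.
move=> f g e; apply/malgP => w; apply/malgP => b.
by rewrite -!coef e.
Qed.

End Rep.

Lemma posv_emb k (n : Nk k) : posv (emb n) = n.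
Proof. by apply/ffunP => i; rewrite !ffunE. Qed.
Lemma negv_emb k (n : Nk k) : negv (emb n) = 0.
Proof. by apply/ffunP => i; rewrite !ffunE. Qed.
Lemma posv_nemb k (n : Nk k) : posv (- emb n) = 0.
Proof. by apply/ffunP => i; rewrite !ffunE; case: (n i) => [|m] //; rewrite -NegzE. Qed.
Lemma negv_nemb k (n : Nk k) : negv (- emb n) = n.
Proof. by apply/ffunP => i; rewrite !ffunE; case: (n i) => [|m] //; rewrite -NegzE. Qed.

Section Final.
Variables (R : comNzRingType) (k : nat) (L : kgraph k) (hns : no_sources L).
Hypothesis H1 : forall l : kp L, kr l = ks l.
Hypothesis H2 : forall (n : Nk k) (l m : kp L), kd l = n -> kd m = n -> kr l = kr m -> l = m.
Variables (B : nalg R) (p : kv L -> B) (s sst : kp L -> B).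
Hypothesis hB : KP_universal p s sst.

Local Notation V := (kv L).
Local Notation D := (laurent_dsum R k V).
Local Notation u := (@upath k L).

Let hF : KP_family p s sst. Proof. by case: hB. Qed.
Let pinj : injective (psi s sst) := psi_inj hns H1 H2 hB.
Let pD := psiD hns H1 H2 hF.
Let pZ := psiZ hns H1 H2 hF.
Let pM := psiM hns H1 H2 hF.

Lemma DscaleA a b (x : D) : dsum_scale a (dsum_scale b x) = dsum_scale (a * b) x.
Proof. by apply: pinj; rewrite !pZ nscaleA. Qed.
Lemma Dscale1 (x : D) : dsum_scale 1 x = x.
Proof. by apply: pinj; rewrite !pZ nscale1. Qed.
Lemma DscaleDr a (x y : D) : dsum_scale a (x + y) = dsum_scale a x + dsum_scale a y.
Proof. by apply: pinj; rewrite !(pZ, pD) nscaleDr. Qed.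
Lemma DscaleDl a b (x : D) : dsum_scale (a + b) x = dsum_scale a x + dsum_scale b x.
Proof. by apply: pinj; rewrite !(pZ, pD) nscaleDl. Qed.
Lemma DmulA (x y z : D) : dsum_mul x (dsum_mul y z) = dsum_mul (dsum_mul x y) z.
Proof. by apply: pinj; rewrite !pM nmulA. Qed.
Lemma DmulDl (x y z : D) : dsum_mul (x + y) z = dsum_mul x z + dsum_mul y z.
Proof. by apply: pinj; rewrite !(pM, pD) nmulDl. Qed.
Lemma DmulDr (x y z : D) : dsum_mul x (y + z) = dsum_mul x y + dsum_mul x z.
Proof. by apply: pinj; rewrite !(pM, pD) nmulDr. Qed.
Lemma DmulZl a (x y : D) : dsum_mul (dsum_scale a x) y = dsum_scale a (dsum_mul x y).
Proof. by apply: pinj; rewrite !(pM, pZ) nmulZl. Qed.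
Lemma DmulZr a (x y : D) : dsum_mul x (dsum_scale a y) = dsum_scale a (dsum_mul x y).
Proof. by apply: pinj; rewrite !(pM, pZ) nmulZr. Qed.

Definition Dalg : nalg R :=
  @NAlg R D (@dsum_scale R k V) (@dsum_mul R k V) DscaleA Dscale1 DscaleDr DscaleDl
    DmulA DmulDl DmulDr DmulZl DmulZr.

Lemma DmulE (x y : Dalg) : nmul Dalg x y = dsum_mul x y. Proof. by []. Qed.

Definition Pd (v : V) : Dalg := << (<< 1 *g (0 : Zk k) >> : laurent R k) *g v >>.
Definition Sd (l : kp L) : Dalg := << (<< 1 *g emb (kd l) >> : laurent R k) *g kr l >>.
Definition Td (l : kp L) : Dalg := << (<< 1 *g - emb (kd l) >> : laurent R k) *g kr l >>.

Lemma psiPd v : psi s sst (Pd v) = p v.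
Proof.
by rewrite /Pd (psiU hns H1 H2 hF) (psivU hns H1 H2 hF) nscale1 (Tm0 hns H1 H2 hF).
Qed.

Lemma psiSd l : psi s sst (Sd l) = s l.
Proof.
rewrite /Sd (psiU hns H1 H2 hF) (psivU hns H1 H2 hF) nscale1 /Tm posv_emb negv_emb.
by rewrite (tv0 hns H1 H2 hF) (Sp hns H1 H2 hF) (u_eq hns H1 H2).
Qed.

Lemma psiTd l : psi s sst (Td l) = sst l.
Proof.
rewrite /Td (psiU hns H1 H2 hF) (psivU hns H1 H2 hF) nscale1 /Tm posv_nemb negv_nemb.
by rewrite (sv0 hns H1 H2 hF) (pT hns H1 H2 hF) (u_eq hns H1 H2).
Qed.

Lemma D_family : KP_family Pd Sd Td.
Proof.
case: hF => hv [hP1 hP2] [hK2 hK2'] hK3 hK4.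
split.
- move=> v; have [e1 e2] := hv v; split; apply: pinj.
    by rewrite psiSd psiPd.
  by rewrite psiTd psiPd.
- split=> [v|v w hvw]; apply: pinj; rewrite DmulE pM !psiPd.
    by rewrite hP1.
  by rewrite hP2 // (psi0 hns H1 H2 hF).
- split.
    move=> l m hl hm hlm; have [e1 e2] := hK2 l m hl hm hlm.
    split; apply: pinj; rewrite DmulE pM.
      by rewrite !psiSd.
    by rewrite !psiTd.
  move=> l hl; have [e1 e2 e3 e4] := hK2' l hl.
  split; apply: pinj; rewrite DmulE pM.
  + by rewrite psiSd psiPd.
  + by rewrite psiSd psiPd.
  + by rewrite psiTd psiPd.
  + by rewrite psiTd psiPd.
- move=> l m hl hlm; apply: pinj; rewrite DmulE pM psiSd psiTd hK3 //.
  case: eqP => _; first by rewrite psiPd.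
  by rewrite (psi0 hns H1 H2 hF).
- move=> v n hn s0 hu hs; apply: pinj; rewrite (psi_sum hns H1 H2 hF) psiPd (hK4 v n hn s0 hu hs).
  by apply: eq_bigr => l _; rewrite DmulE pM psiSd psiTd.
Qed.

Lemma two_to_four : iso_to_laurent_dsum k V B.
Proof.
have [phi [hphi hp hs hsst _]] := (proj2 hB) Dalg Pd Sd Td D_family.
have [phi0 [_ _ _ _ huniq]] := (proj2 hB) B p s sst hF.
have hcomp : nalg_hom (fun x => psi s sst (phi x)).
  case: hphi => hA hZ hMul; split => [x y|a x|x y].
  - by rewrite hA pD.
  - by rewrite hZ /= pZ.
  - by rewrite hMul /= pM.
have E1 := huniq (fun x => psi s sst (phi x)).
have E2 := huniq id.
have hid : nalg_hom (@id B) by split.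
have C1 : [/\ nalg_hom (fun x => psi s sst (phi x)),
      forall v, psi s sst (phi (p v)) = p v,
      forall l, psi s sst (phi (s l)) = s l
    & forall l, psi s sst (phi (sst l)) = sst l].
  split => //; [by move=> v; rewrite hp psiPd | by move=> l; rewrite hs psiSd
    | by move=> l; rewrite hsst psiTd].
have canl : forall x, psi s sst (phi x) = x.
  by move=> x; rewrite (E1 C1 x) -(E2 _ x).
exists phi; split.
- exists (psi s sst) => // f; apply: pinj; by rewrite canl.
- by case: hphi.
- by case: hphi.
- by case: hphi.
Qed.

End Final.

Theorem proposition5p3 (R : comNzRingType) (k : nat) (hk : (1 <= k)%N)
    (L : kgraph k) (hrf : row_finite L) (hns : no_sources L)
    (B : nalg R) (p : kv L -> B) (s sst : kp L -> B)
    (hB : KP_universal p s sst) :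
  [<-> (* (1) KP_R(L) is commutative *)
       nalg_commutative B;
       (* (2) r = s everywhere, and r is injective on each L^n *)
       (forall l : kp L, kr l = ks l) /\
       (forall (n : Nk k) (l m : kp L), kd l = n -> kd m = n ->
          kr l = kr m -> l = m);
       (* (3) L is isomorphic to the disjoint union of copies of N^k *)
       kgraph_iso L (disjoint_union_Nk k (kv L));
       (* (4) KP_R(L) is isomorphic to a direct sum of Laurent polynomial rings *)
       iso_to_laurent_dsum k (kv L) B].
Proof.
tfae.
- exact (one_to_two hns hB).
- exact (two_to_three hns).
- move=> h3; have [H1 H2] := three_to_two h3; exact (two_to_four hns H1 H2 hB).
- move=> h4; exact (four_to_one h4).
Qed.
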